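(* Let $\sigma$ be a proper partial action of a locally compact Hausdorff group $G$ on a locally compact Hausdorff space $X$. Then the closure $E_\sigma$ of $C_c(X)$ in $E_{\sigma^e}$ equals the closure in $E_{\sigma^e}$ of $E^0_\sigma:=C_c(X^e)\cap C_0(X)$.
   Context: A topological partial action $\sigma=(\{X_t\},\{\sigma_t\})$: open $X_t\subseteq X$, homeomorphisms $\sigma_t\colon X_{t^{-1}}\to X_t$, $X_e=X$, $\sigma_e=\mathrm{id}$, $\sigma_s(X_{s^{-1}}\cap X_t)=X_s\cap X_{st}$, $\sigma_s\sigma_t=\sigma_{st}$ on $X_{t^{-1}}\cap X_{t^{-1}s^{-1}}$, $\Gamma_\sigma=\{(t,x):x\in X_{t^{-1}}\}$ open and $(t,x)\mapsto\sigma_t(x)$ continuous; proper means $(t,x)\mapsto(\sigma_t(x),x)$, $\Gamma_\sigma\to X\times X$, is proper. The enveloping action $\sigma^e$ on $X^e$ is the global action with $X$ open in $X^e$, $X_t=X\cap\sigma^e_t(X)$, $\sigma_t=\sigma^e_t|_{X_{t^{-1}}}$, $X^e=\bigcup_t\sigma^e_t(X)$; for proper $\sigma$, $X^e$ is locally compact Hausdorff and $\sigma^e$ is proper. $C_0(X)$ is viewed as an ideal of $C_0(X^e)$ (extension by zero), so $C_c(X)\subseteq C_c(X^e)\cap C_0(X)$. $X/\sigma\cong X^e/\sigma^e$ denotes the orbit space. $E_{\sigma^e}$ is the completion of $C_c(X^e)$ as a left Hilbert $C_0(X/\sigma)$-module with $(fg)(x)=f([x])g(x)$ and $\langle g,h\rangle([x])=\int_G(g\bar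 h)(\sigma^e_{t^{-1}}(x))\,dt$ (Haar measure $dt$). *)

(* Defs.v *)
From HB Require Import structures.
From mathcomp Require Import all_boot all_order all_algebra.
From mathcomp Require Import all_classical all_reals all_analysis.
From mathcomp Require Import complex.
Import Order.TTheory GRing.Theory Num.Theory.
Import numFieldTopology.Exports numFieldNormedType.Exports.

Set Implicit Arguments.
Unset Strict Implicit.
Unset Printing Implicit Defensive.

Local Open Scope classical_set_scope.
Local Open Scope ring_scope.

Definition Cplx (R : realType) := (R[i])^o.

Definition is_topgroup (G : topologicalType) (mul : G -> G -> G) (inv : G -> G)
  (one : G) : Prop :=
  [/\ (forall a b c, mul a (mul b c) = mul (mul a b) c),
      (forall a, (mul one a = a) /\ (mul a one = a)),
      (forall a, (mul (inv a) a = one) /\ (mul a (inv a) = one)),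
      continuous (fun p : G * G => mul p.1 p.2) &
      continuous inv].

Definition borelG (G : ptopologicalType) := g_sigma_algebraType (@open G).

Definition is_left_Haar (R : realType) (G : ptopologicalType)
  (mul : G -> G -> G) (mu : {measure set (borelG G) -> \bar R}) : Prop :=
  [/\ (forall (g : G) (A : set (borelG G)), measurable A ->
          mu [set mul g a | a in A] = mu A),
      (forall K : set G, compact K -> (mu K < +oo)%E),
      (forall A : set (borelG G), measurable A ->
          mu A = ereal_inf [set mu U | U in [set U : set G | open U /\ A `<=` U]]),
      (forall U : set G, open U ->
          mu U = ereal_sup [set mu K | K in [set K : set G | compact K /\ K `<=` U]]) &
      (0 < mu setT)%E].

Definition homeo_on (T U : topologicalType) (A : set T) (B : set U) (f : T -> U) :=
  [/\ (forall x, A x -> B (f x)),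
      (forall x y, A x -> A y -> f x = f y -> x = y),
      (forall y, B y -> exists2 x, A x & f x = y),
      {within A, continuous f} &
      exists g : U -> T, (forall y, B y -> A (g y) /\ f (g y) = y) /\
                         {within B, continuous g}].

Definition Gamma_dom (G X : Type) (inv : G -> G) (D : G -> set X) : set (G * X) :=
  [set p | D (inv p.1) p.2].

(* sigma = ({X_t} = D, {sigma_t} = s) is a topological partial action of G on X. *)
Definition is_partial_action (G X : topologicalType) (mul : G -> G -> G)
  (inv : G -> G) (one : G) (D : G -> set X) (s : G -> X -> X) : Prop :=
  [/\ (forall t, open (D t)) /\ (forall t, homeo_on (D (inv t)) (D t) (s t)),
      (D one = setT /\ (forall x, s one x = x)),
      (forall t u, s t @` (D (inv t) `&` D u) = D t `&` D (mul t u)),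
      (forall t u x, D (inv u) x -> D (inv (mul t u)) x ->
          s t (s u x) = s (mul t u) x) &
      (open (Gamma_dom inv D) /\
      {within Gamma_dom inv D, continuous (fun p : G * X => s p.1 p.2)})].

Definition proper_partial_action (G X : topologicalType) (inv : G -> G)
  (D : G -> set X) (s : G -> X -> X) : Prop :=
  forall K : set (X * X), compact K ->
    compact (Gamma_dom inv D `&` [set p | K (s p.1 p.2, p.2)]).

Definition is_global_action (G Y : topologicalType) (mul : G -> G -> G)
  (one : G) (th : G -> Y -> Y) : Prop :=
  [/\ (forall y, th one y = y),
      (forall t u y, th t (th u y) = th (mul t u) y) &
      continuous (fun p : G * Y => th p.1 p.2)].

Definition open_embedding (X Y : topologicalType) (iota : X -> Y) : Prop :=
  [/\ injective iota, continuous iota &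
      forall U : set X, open U -> open (iota @` U)].

Definition is_enveloping_action (G X Y : topologicalType) (mul : G -> G -> G)
  (inv : G -> G) (one : G) (D : G -> set X) (s : G -> X -> X)
  (th : G -> Y -> Y) (iota : X -> Y) : Prop :=
  [/\ is_global_action mul one th,
      open_embedding iota,
      (forall t, iota @` D t = range iota `&` th t @` range iota),
      (forall t x, D (inv t) x -> iota (s t x) = th t (iota x)) &
      (forall y, exists t, (th t @` range iota) y)].

Section functions.
Variable R : realType.

Definition Cc (T : topologicalType) (f : T -> Cplx R) : Prop :=
  continuous f /\ compact (closure [set x | f x != 0]).

Definition C0 (T : topologicalType) (f : T -> Cplx R) : Prop :=
  continuous f /\
  forall e : R, 0 < e -> exists2 K : set T, compact K &
    forall x, ~ K x -> Normc.normc (f x : R[i]) < e.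

Definition ext_by_zero (X Y : Type) (iota : X -> Y) (f : X -> Cplx R)
  (g : Y -> Cplx R) : Prop :=
  (forall x, g (iota x) = f x) /\ (forall y, ~ range iota y -> g y = 0).

Definition CcX_in (X Y : topologicalType) (iota : X -> Y) (g : Y -> Cplx R) :=
  exists2 f : X -> Cplx R, Cc f & ext_by_zero iota f g.

Definition E0 (X Y : topologicalType) (iota : X -> Y) (g : Y -> Cplx R) :=
  Cc g /\ exists2 f : X -> Cplx R, C0 f & ext_by_zero iota f g.

(* ||g||^2 in E_{sigma^e} for g in C_c(X^e):
   || <g,g> ||_oo = sup_{[y]} int_G |g(th_{t^-1} y)|^2 dt. *)
Definition Enorm2 (G : ptopologicalType) (Y : topologicalType) (inv : G -> G)
  (mu : {measure set (borelG G) -> \bar R}) (th : G -> Y -> Y)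
  (g : Y -> Cplx R) : \bar R :=
  ereal_sup (range (fun y : Y =>
    (\int[mu]_(t in setT) ((Normc.normc (g (th (inv t) y) : R[i])) ^+ 2)%:E)%E)).

Definition in_Eclosure (G : ptopologicalType) (Y : topologicalType) (inv : G -> G)
  (mu : {measure set (borelG G) -> \bar R}) (th : G -> Y -> Y)
  (S : (Y -> Cplx R) -> Prop) (g : Y -> Cplx R) : Prop :=
  forall e : R, 0 < e -> exists2 h, S h & (Enorm2 inv mu th (fun y => (g y - h y)%R) < e%:E)%E.

End functions.

(* Main.v *)
Require Import Defs.
From HB Require Import structures.
From mathcomp Require Import all_boot all_order all_algebra.
From mathcomp Require Import all_classical all_reals all_analysis.
From mathcomp Require Import complex.
Import numFieldTopology.Exports numFieldNormedType.Exports.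
Import Order.TTheory GRing.Theory Num.Theory.
Local Open Scope classical_set_scope.
Local Open Scope ring_scope.
Set Implicit Arguments.
Unset Strict Implicit.
Unset Printing Implicit Defensive.
From mathcomp Require Import lra.
From mathcomp Require Import measurable_realfun.

Section A.
Variable R : realType.
Local Notation nc := (@Normc.normc R).
Local Notation cR x := (real_complex R x).

Lemma normCE (z : Cplx R) : `|z| = cR (nc z).
Proof. by []. Qed.

Lemma cvgC (T : Type) (F : set_system T) {FF : Filter F} (f : T -> Cplx R) (a : Cplx R) :
  f @ F --> a <-> forall e : R, 0 < e -> \forall t \near F, nc (a - f t) < e.
Proof.
rewrite cvgrPdist_lt; split.
  move=> H e e0; have := H (cR e); rewrite ltcR => /(_ e0).
  by apply: filterS => t; rewrite normCE ltcR.
move=> H eps; rewrite ltcE /= => /andP[/eqP Ie Re0].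
apply: filterS (H _ Re0) => t ht; rewrite normCE ltcE /= -Ie eqxx /=.
by rewrite ht.
Qed.

Lemma ncN (a : Cplx R) : nc (- a) = nc a.
Proof. exact: complex.normcN. Qed.
Lemma nc_dist (a b : Cplx R) : `|nc a - nc b| <= nc (a - b).
Proof.
have h1 : nc a <= nc (a - b) + nc b by rewrite -{1}(subrK b a) complex.le_normcD.
have h2 : nc b <= nc (a - b) + nc a.
  rewrite -{1}(subrK a b); apply: le_trans (complex.le_normcD _ _) _.
  by rewrite -[nc (b - a)]ncN opprB.
rewrite ler_norml; apply/andP; split; lra.
Qed.
Lemma nc_ge0 (a : Cplx R) : 0 <= nc a.
Proof. by case: a => x y; rewrite /Normc.normc sqrtr_ge0. Qed.
Lemma nc_real (r : R) : nc (cR r) = `|r|.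
Proof. by rewrite /Normc.normc /= expr0n /= addr0 sqrtr_sqr. Qed.
Lemma nc0 : nc 0 = 0.
Proof. exact: Normc.normc0. Qed.
Lemma nc_eq0 (a : Cplx R) : (nc a == 0) = (a == 0).
Proof. by apply/eqP/eqP => [/Normc.eq0_normc|->]; rewrite ?nc0. Qed.
Lemma ncM (a b : Cplx R) : nc (a * b) = nc a * nc b.
Proof. exact: Normc.normcM. Qed.
Lemma ncD (a b : Cplx R) : nc (a + b) <= nc a + nc b.
Proof. exact: complex.le_normcD. Qed.

Lemma cont_nc (T : topologicalType) (f : T -> Cplx R) x :
  {for x, continuous f} -> {for x, continuous (fun y => nc (f y))}.
Proof.
move=> /cvgC H; apply/cvgrPdist_lt => e e0.
by apply: filterS (H e e0) => y; apply: le_lt_trans; exact: nc_dist.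
Qed.

Lemma cont_cR (T : topologicalType) (f : T -> R) x :
  {for x, continuous f} -> {for x, continuous (fun y => (cR (f y) : Cplx R))}.
Proof.
move=> /cvgrPdist_lt H; apply/cvgC => e e0.
by apply: filterS (H e e0) => y; rewrite -rmorphB nc_real.
Qed.
End A.


Section Grp.
Variables (G : topologicalType) (mul : G -> G -> G) (inv : G -> G) (one : G).
Hypothesis Hg : is_topgroup mul inv one.

Lemma gA a b c : mul a (mul b c) = mul (mul a b) c.
Proof. by case: Hg => h _ _ _ _; apply: h. Qed.
Lemma g1l a : mul one a = a. Proof. by case: Hg => _ h _ _ _; case: (h a). Qed.
Lemma g1r a : mul a one = a. Proof. by case: Hg => _ h _ _ _; case: (h a). Qed.
Lemma gVl a : mul (inv a) a = one. Proof. by case: Hg => _ _ h _ _; case: (h a). Qed.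
Lemma gVr a : mul a (inv a) = one. Proof. by case: Hg => _ _ h _ _; case: (h a). Qed.
Lemma gK a b : mul (inv a) (mul a b) = b. Proof. by rewrite gA gVl g1l. Qed.
Lemma gKV a b : mul a (mul (inv a) b) = b. Proof. by rewrite gA gVr g1l. Qed.
Lemma ginvK a : inv (inv a) = a.
Proof. by rewrite -[RHS](gK (inv a)) gVl g1r. Qed.
Lemma ginvM a b : inv (mul a b) = mul (inv b) (inv a).
Proof.
have h : mul (mul (inv b) (inv a)) (mul a b) = one by rewrite -gA gK gVl.
by rewrite -[LHS]g1l -h -gA gVr g1r.
Qed.
Lemma gmul_cont : continuous (fun p : G * G => mul p.1 p.2).
Proof. by case: Hg. Qed.
Lemma ginv_cont : continuous inv.
Proof. by case: Hg. Qed.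
Lemma gmull_cont a : continuous (mul a).
Proof.
move=> x; apply: (@continuous_comp _ _ _ (fun y => (a, y)) (fun p => mul p.1 p.2)).
  by apply: cvg_pair; [exact: cvg_cst | exact: cvg_id].
exact: gmul_cont.
Qed.
Lemma gmulr_cont a : continuous (mul^~ a).
Proof.
move=> x; apply: (@continuous_comp _ _ _ (fun y => (y, a)) (fun p => mul p.1 p.2)).
  by apply: cvg_pair; [exact: cvg_id | exact: cvg_cst].
exact: gmul_cont.
Qed.
End Grp.

Section Act.
Variables (G Y : topologicalType) (mul : G -> G -> G) (inv : G -> G) (one : G).
Variable th : G -> Y -> Y.
Hypothesis Hg : is_topgroup mul inv one.
Hypothesis Ha : is_global_action mul one th.

Lemma th1 y : th one y = y. Proof. by case: Ha. Qed.
Lemma thM t u y : th t (th u y) = th (mul t u) y. Proof. by case: Ha => _ h _; apply: h. Qed.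
Lemma thK t y : th (inv t) (th t y) = y. Proof. by rewrite thM (gVl Hg) th1. Qed.
Lemma thKV t y : th t (th (inv t) y) = y. Proof. by rewrite thM (gVr Hg) th1. Qed.
Lemma th_inj t : injective (th t).
Proof. by move=> y z /(congr1 (th (inv t))); rewrite !thK. Qed.
Lemma th_cont t : continuous (th t).
Proof.
case: Ha => _ _ hc x.
apply: (@continuous_comp _ _ _ (fun y => (t, y)) (fun p => th p.1 p.2)).
  by apply: cvg_pair; [exact: cvg_cst | exact: cvg_id].
exact: hc.
Qed.
Lemma th_image t (U : set Y) : th t @` U = th (inv t) @^-1` U.
Proof.
apply/seteqP; split => y /=.
  by case=> z Uz <-; rewrite thK.
by move=> Uy; exists (th (inv t) y) => //; rewrite thKV.
Qed.
Lemma th_open t (U : set Y) : open U -> open (th t @` U).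
Proof. by rewrite th_image => oU; move/continuousP: (th_cont (t:=inv t)); apply. Qed.
End Act.


Section Env.
Variables (G X Y : topologicalType) (mul : G -> G -> G) (inv : G -> G) (one : G).
Variables (D : G -> set X) (s : G -> X -> X) (th : G -> Y -> Y) (iota : X -> Y).
Hypothesis Hg : is_topgroup mul inv one.
Hypothesis HG : hausdorff_space G.
Hypothesis HX : hausdorff_space X.
Hypothesis HLC : locally_compact [set: X].
Hypothesis Hpa : is_partial_action mul inv one D s.
Hypothesis Hpr : proper_partial_action inv D s.
Hypothesis He : is_enveloping_action mul inv one D s th iota.

Lemma He_act : is_global_action mul one th. Proof. by case: He. Qed.
Lemma He_emb : open_embedding iota. Proof. by case: He. Qed.
Lemma iota_inj : injective iota. Proof. by case: He_emb. Qed.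
Lemma iota_cont : continuous iota. Proof. by case: He_emb. Qed.
Lemma iota_open (U : set X) : open U -> open (iota @` U).
Proof. by case: He_emb => _ _; apply. Qed.
Lemma He_dom t : iota @` D t = range iota `&` th t @` range iota.
Proof. by case: He. Qed.
Lemma He_s t x : D (inv t) x -> iota (s t x) = th t (iota x).
Proof. by case: He => _ _ _ h _; apply: h. Qed.
Lemma He_cov y : exists t, (th t @` range iota) y.
Proof. by case: He. Qed.

Lemma env_pt b u v : iota u = th b (iota v) -> D (inv b) v /\ s b v = u.
Proof.
move=> e.
have : (iota @` D b) (iota u).
  by rewrite He_dom; split; [exists u | exists (iota v) => //; exists v].
case=> u' Du' /iota_inj eu; subst u'.
case: Hpa => [[_ hom] _ _ _ _]; case: (hom b) => _ _ hsurj _ _.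
case: (hsurj u Du') => w Dw ew.
have : iota w = iota v.
  apply: (th_inj Hg He_act (t:=b)); rewrite -e -He_s //; by rewrite ew.
by move/iota_inj => ewv; subst w.
Qed.

Lemma lc_nbhs (x : X) : exists U : set X, nbhs x U /\ compact U.
Proof.
have [U hU [cU _]] := HLC (I : [set: X] x).
by exists U; split => //; move: hU; rewrite withinET.
Qed.

Lemma iota_closed (K : set X) : compact K -> closed (iota @` K).
Proof.
move=> cK y cly.
have [b [z [x2 _ <-] eb]] := He_cov y.
have [V0 [nV0 cV0]] := lc_nbhs x2.
pose Q := [set v | D (inv b) v /\ K (s b v)].
have clQ : closure Q x2.
  move=> B; rewrite nbhsE => -[U [oU Ux2] UB].
  have oO : open (th b @` (iota @` U)) by apply: (th_open Hg He_act); exact: iota_open.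
  have : nbhs y (th b @` (iota @` U)).
    by apply: open_nbhs_nbhs; split => //; rewrite -eb; exists (iota x2) => //; exists x2.
  case/cly => _ [[u Ku <-] [_ [v Uv <-] e]].
  have [Dv hv] := env_pt (esym e).
  by exists v; split; [split => //; rewrite hv | exact: UB].
have PF0 : ProperFilter (within Q (nbhs x2)) := within_nbhs_proper clQ.
pose F := (fun v => (b, v)) @ within Q (nbhs x2).
pose P := Gamma_dom inv D `&` [set p | (K `*` V0) (s p.1 p.2, p.2)].
have cP : compact P by apply: Hpr; exact: compact_setX.
have FP : F P.
  rewrite /F /= /within; apply: filterS nV0 => v V0v [Dv Kv].
  by split => //.
have [[b' x'] [Pp clp]] := cP F _ FP.
have eb' : b = b'.
  apply: HG => A B nA nB.
  have FA : F [set q | A q.1].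
    by apply: (@filterE _ (within Q (nbhs x2))) => v /=; exact: nbhs_singleton nA.
  have nB' : nbhs (b', x') [set q | B q.1].
    by exists (B, setT) => //=; [split => //; exact: filterT | move=> [q1 q2] [] ].
  by have [q [Aq Bq]] := clp _ _ FA nB'; exists q.1.
have ex : x2 = x'.
  apply: HX => A B nA nB.
  have FA : F [set q | A q.2].
    by rewrite /F /= /within; apply: filterS nA => v Av _.
  have nB' : nbhs (b', x') [set q | B q.2].
    by exists (setT, B) => //=; [split => //; exact: filterT | move=> [q1 q2] [] ].
  by have [q [Aq Bq]] := clp _ _ FA nB'; exists q.2.
subst b' x'.
case: Pp => /= Dx2 [Ks _].
by exists (s b x2) => //; rewrite He_s.
Qed.

Lemma CcX_E0 (R : realType) (h : Y -> Cplx R) : CcX_in iota h -> E0 iota h.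
Proof.
case=> f [cf cK] [hf h0].
set K := closure [set x | f x != 0] in cK *.
have cIK := iota_closed cK.
have supp y : h y != 0 -> (iota @` K) y.
  case: (pselect (range iota y)) => [[x _ <-]|ny]; last by rewrite h0 ?eqxx.
  by rewrite hf => fx; exists x => //; exact: subset_closure.
have fK x : ~ K x -> f x = 0.
  move=> nK; case: (eqVneq (f x) 0) => // fx; exfalso; apply: nK.
  exact: subset_closure.
split; last first.
  exists f => //; split => // e e0; exists K => // x /fK ->.
  by rewrite nc0.
split.
  move=> y; case: (pselect (range iota y)) => [[x _ <-]|ny].
    move=> W; rewrite hf => /cf; rewrite nbhsE => -[U [oU Ux] UW].
    apply: (@filterS _ _ _ (iota @` U)).
      by move=> _ [u Uu <-] /=; rewrite hf; exact: UW.
    by apply: open_nbhs_nbhs; split; [exact: iota_open | exists x].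
  move=> W; rewrite h0 // => nW.
  have oC : open (~` (iota @` K)) by exact: closed_openC.
  apply: (@filterS _ _ _ (~` (iota @` K))).
    move=> z nz /=.
    have -> : h z = 0.
      by case: (eqVneq (h z) 0) => // /supp hz; exfalso; exact: nz.
    exact: nbhs_singleton nW.
  apply: open_nbhs_nbhs; split => //.
  by move=> [x Kx ex]; apply: ny; exists x.
apply: (subclosed_compact (@closed_closure _ _)).
  by apply: continuous_compact; [apply: continuous_subspaceT; exact: iota_cont | exact: cK].
have -> : iota @` K = closure (iota @` K) by apply/closure_id.
by apply: closureS => y /= /supp.
Qed.
End Env.


Section Trunc.
Variable R : realType.
Local Notation nc := (@Normc.normc R).
Local Notation cR x := (real_complex R x).
Variable c : R.
Hypothesis c0 : 0 < c.

Definition psi (r : R) : R := Num.min 1 (Num.max 0 (r / c - 1)).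

Lemma psi_ge0 r : 0 <= psi r.
Proof. by rewrite /psi le_min ler01 le_max lexx. Qed.
Lemma psi_le1 r : psi r <= 1.
Proof. by rewrite /psi ge_min lexx. Qed.
Lemma psi_lt r : r < c -> psi r = 0.
Proof.
move=> rc; have : r / c - 1 < 0.
  by rewrite subr_lt0 ltr_pdivrMr // mul1r.
by move=> h; rewrite /psi (max_idPl (ltW h)) (min_idPr ler01).
Qed.
Lemma psi_ge r : 2 * c <= r -> psi r = 1.
Proof.
move=> rc; have : 1 <= r / c - 1.
  by rewrite lerBrDr ler_pdivlMr // -[1 + 1]/(2%:R) .
move=> h; rewrite /psi (max_idPr (le_trans ler01 h)).
exact: (min_idPl h).
Qed.
Lemma psi_cont : continuous psi.
Proof.
move=> r; apply: (@continuous_min R R (fun _ => 1) (fun r => Num.max 0 (r / c - 1))); first exact: cvg_cst.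
apply: (@continuous_max R R (fun _ => 0) (fun r => r / c - 1)); first exact: cvg_cst.
apply: cvgB; last exact: cvg_cst.
apply: cvgMl; exact: cvg_id.
Qed.

Lemma trunc_bound (z : Cplx R) : nc (z - z * cR (psi (nc z))) <= 2 * c.
Proof.
have -> : z - z * cR (psi (nc z)) = z * cR (1 - psi (nc z)).
  by rewrite rmorphB rmorph1 mulrBr mulr1.
rewrite ncM nc_real.
have p0 := psi_ge0 (nc z); have p1 := psi_le1 (nc z).
case: (leP (2 * c) (nc z)) => h.
  by rewrite psi_ge // subrr normr0 mulr0 mulr_ge0 // ltW.
rewrite ger0_norm ?subr_ge0 //.
apply: le_trans (ltW h); rewrite ler_piMr ?nc_ge0 //.
by rewrite lerBlDr lerDl.
Qed.

Lemma trunc_zero (z : Cplx R) : nc z < c -> z * cR (psi (nc z)) = 0.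
Proof. by move=> h; rewrite psi_lt // mulr0. Qed.
End Trunc.


Section Orbit.
Variables (G : ptopologicalType) (X Y : topologicalType) (mul : G -> G -> G) (inv : G -> G) (one : G).
Variables (D : G -> set X) (s : G -> X -> X) (th : G -> Y -> Y) (iota : X -> Y).
Variables (R : realType) (mu : {measure set (borelG G) -> \bar R}).
Hypothesis Hg : is_topgroup mul inv one.
Hypothesis HG : hausdorff_space G.
Hypothesis HX : hausdorff_space X.
Hypothesis HLC : locally_compact [set: X].
Hypothesis HH : is_left_Haar mul mu.
Hypothesis Hpa : is_partial_action mul inv one D s.
Hypothesis Hpr : proper_partial_action inv D s.
Hypothesis He : is_enveloping_action mul inv one D s th iota.

Let Ha := He_act He.

Lemma meas_open (A : set G) : open A -> measurable (A : set (borelG G)).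
Proof. by move=> oA; apply: sub_sigma_algebra. Qed.

Lemma meas_closed (A : set G) : closed A -> measurable (A : set (borelG G)).
Proof.
move=> cA; rewrite -[A]setCK; apply: measurableC; apply: meas_open.
exact: closed_openC.
Qed.

Lemma meas_compact (A : set G) : compact A -> measurable (A : set (borelG G)).
Proof. by move=> cA; apply: meas_closed; exact: compact_closed. Qed.

Lemma mu_compact_fin (A : set G) : compact A -> (mu A < +oo)%E.
Proof. by case: HH => _ h _ _ _; apply: h. Qed.

Lemma mu_inv_left (g : G) (A : set G) : measurable (A : set (borelG G)) ->
  mu [set mul g a | a in A] = mu A.
Proof. by case: HH => h _ _ _ _; apply: h. Qed.

Definition OB (L : set Y) := exists B : R, (0 <= B) /\ forall y, exists M : set (borelG G),
  [/\ measurable M, (mu M <= B%:E)%E & forall t : G, L (th (inv t) y) -> M t].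

Lemma OB_sub (L L' : set Y) : L' `<=` L -> OB L -> OB L'.
Proof.
move=> sL [B [B0 hB]]; exists B; split => // y; have [M [mM muM hM]] := hB y.
by exists M; split => // t /sL; apply: hM.
Qed.

Lemma OB0 : OB set0.
Proof. by exists 0; split => // y; exists set0; split => //; rewrite measure0. Qed.

Lemma OBU (L1 L2 : set Y) : OB L1 -> OB L2 -> OB (L1 `|` L2).
Proof.
move=> [B1 [B10 h1]] [B2 [B20 h2]]; exists (B1 + B2); split; first exact: addr_ge0.
move=> y; have [M1 [m1 mu1 s1]] := h1 y; have [M2 [m2 mu2 s2]] := h2 y.
exists (M1 `|` M2); split; first exact: measurableU.
  apply: le_trans (measureU2 _ m1 m2) _; rewrite EFinD; exact: leeD.
by move=> t [/s1|/s2] h; [left|right].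
Qed.

Lemma OB_seq (F : Y -> set Y) (r : seq Y) : (forall i, OB (F i)) ->
  OB (\bigcup_(i in [set i | i \in r]) F i).
Proof.
move=> hF; elim: r => [|a r IH].
  by apply: OB_sub OB0 => y [i /=]; rewrite in_nil.
apply: OB_sub (OBU (hF a) IH) => y [i /=]; rewrite in_cons => /orP[/eqP ->|ir] Fy.
  by left.
by right; exists i.
Qed.


Lemma fst_cont : continuous (@fst G X).
Proof. by move=> p; exact: cvg_fst. Qed.

Lemma OB_piece (K : set X) (a : G) : compact K -> OB (th a @` (iota @` K)).
Proof.
move=> cK.
pose P := Gamma_dom inv D `&` [set p | (K `*` K) (s p.1 p.2, p.2)].
have cP : compact P by apply: Hpr; exact: compact_setX.
pose phi := fun p : G * X => mul a (mul (inv p.1) (inv a)).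
have cphi : continuous phi.
  move=> p; apply: (@continuous_comp _ _ _ (fun p : G * X => mul (inv p.1) (inv a)) (mul a)); last exact: (gmull_cont Hg).
  apply: (@continuous_comp _ _ _ (fun p : G * X => inv p.1) (mul^~ (inv a))); last exact: (gmulr_cont Hg).
  apply: (@continuous_comp _ _ _ fst inv); first exact: fst_cont.
  exact: (ginv_cont Hg).
pose C' := phi @` P.
have cC' : compact C'.
  by apply: continuous_compact => //; exact: continuous_subspaceT.
have mC' := meas_compact cC'.
have fin : (mu C' < +oo)%E := mu_compact_fin cC'.
have eC' : mu C' = (fine (mu C'))%:E.
  by rewrite fineK // ge0_fin_numE.
exists (fine (mu C')); split; first by rewrite fine_ge0.
move=> y; case: (pselect (exists t0, (th a @` (iota @` K)) (th (inv t0) y))); last first.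
  move=> nex; exists set0; split => //; first by rewrite measure0 lee_fin fine_ge0.
  by move=> t ht; apply: nex; exists t.
case=> t0 [_ [k0 Kk0 <-] e0].
pose M := [set mul t0 c | c in C'].
have cM : compact M.
  by apply: continuous_compact => //; apply: continuous_subspaceT; exact: (gmull_cont Hg).
exists M; split; first exact: meas_compact.
  by rewrite mu_inv_left // eC'.
move=> t [_ [k Kk <-] e].
pose sig := mul (inv a) (mul (inv t) (mul t0 a)).
have ek : iota k = th sig (iota k0).
  rewrite /sig -!(thM Ha) e0 (thKV Hg Ha) -e (thK Hg Ha) //.
have [Dk0 sk] := env_pt Hg Hpa He ek.
exists (phi (sig, k0)).
  by exists (sig, k0) => //; split => //=; split => //; rewrite sk.
have isig : inv sig = mul (inv a) (mul (inv t0) (mul t a)).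
  rewrite /sig !(ginvM Hg) !(ginvK Hg) -!(gA Hg) //.
rewrite /phi /= isig -(gA Hg) (gKV Hg) -(gA Hg) -(gA Hg) (gVr Hg) (g1r Hg).
exact: (gKV Hg).
Qed.

Lemma OB_compact (L : set Y) : compact L -> OB L.
Proof.
move=> cL; apply: contrapT => nOB.
pose F := [set A : set Y | OB (L `\` A)].
have FF : Filter F.
  split.
  - by apply: (OB_sub _ OB0) => y [_ /(_ I)].
  - move=> A B FA FB; apply: OB_sub (OBU FA FB) => y [Ly nAB].
    case: (pselect (A y)) => Ay; last by left.
    by right; split => // By; apply: nAB.
  - by move=> A B AB FA; apply: OB_sub FA => y [Ly nB]; split => // Ay; apply: nB; exact: AB.
have PF : ProperFilter F.
  apply: Build_ProperFilter => // F0; apply: nOB; apply: (OB_sub _ F0) => z Lz.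
  by split.
have FL : F L by apply: (OB_sub _ OB0) => z [].
have [y [Ly cly]] := cL F PF FL.
have [a [_ [x _ <-] ey]] := He_cov He y.
have [V [nV cV]] := lc_nbhs HLC x.
move: nV; rewrite nbhsE => -[U [oU Ux] UV].
pose O := th a @` (iota @` U).
have oO : open O by apply: (th_open Hg Ha); exact: (iota_open He).
have nO : nbhs y O.
  by apply: open_nbhs_nbhs; split => //; rewrite -ey; exists (iota x) => //; exists x.
have OBO : OB O.
  apply: (OB_sub _ (OB_piece a cV)) => _ [_ [u Uu <-] <-].
  by exists (iota u) => //; exists u => //; exact: UV.
have FO : F (~` O).
  by apply: (OB_sub _ OBO) => z [_ /contrapT].
by have [z [nOz Oz]] := cly _ _ FO nO.
Qed.

Lemma meas_cont (phi : G -> R) : continuous phi ->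
  measurable_fun setT (phi : borelG G -> R).
Proof.
move=> cphi; apply: (measurability _ (RGenOpens.measurableE R)).
move=> _ [_ [a [b ->]] <-]; rewrite setTI; apply: meas_open.
move/continuousP: cphi; apply; exact: interval_open.
Qed.

Lemma orbit_cont (F : Y -> Cplx R) (y : Y) : continuous F ->
  continuous (fun t : G => Normc.normc (F (th (inv t) y)) ^+ 2).
Proof.
move=> cF t.
apply: (@continuous_comp _ _ _ (fun t : G => Normc.normc (F (th (inv t) y))) (fun r : R => r ^+ 2)); last first.
  exact: exprn_continuous.
apply: cont_nc.
apply: (@continuous_comp _ _ _ (fun t : G => th (inv t) y) F); last exact: cF.
apply: (@continuous_comp _ _ _ inv (fun u => th u y)); first exact: (ginv_cont Hg).
case: Ha => _ _ hc.
apply: (@continuous_comp _ _ _ (fun u => (u, y)) (fun p : G * Y => th p.1 p.2)); last exact: hc.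
by apply: cvg_pair; [exact: cvg_id | exact: cvg_cst].
Qed.

Lemma orbit_meas (F : Y -> Cplx R) (y : Y) : continuous F ->
  measurable_fun setT (fun t : borelG G => ((Normc.normc (F (th (inv t) y)) ^+ 2)%:E)%E).
Proof.
move=> cF; have := meas_cont (orbit_cont (y:=y) cF).
by move/(measurable_EFinP setT).
Qed.

Local Notation nc := (@Normc.normc R).
Local Notation cR x := (real_complex R x).

Lemma cont_trunc (c : R) (c0 : 0 < c) (T : topologicalType) (f : T -> Cplx R) :
  continuous f -> continuous (fun x => f x * cR (psi c (nc (f x)))).
Proof.
move=> cf x.
have h2 : {for x, continuous (fun x => (cR (psi c (nc (f x))) : Cplx R))}.
  apply: (cont_cR (f := fun y => psi c (nc (f y)))).
  apply: (@continuous_comp _ _ _ (fun x => nc (f x)) (psi c)); last exact: psi_cont.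
  exact: (cont_nc (cf x)).
exact: (cvgM (cf x) h2).
Qed.

Lemma trunc_CcX (c : R) (c0 : 0 < c) (h : Y -> Cplx R) : E0 iota h ->
  CcX_in iota (fun y => h y * cR (psi c (nc (h y)))).
Proof.
case=> _ [f [cf f0] [hf h0]].
exists (fun x => f x * cR (psi c (nc (f x)))); last first.
  by split => [x|y ny]; rewrite ?hf ?h0 ?mul0r.
split; first exact: cont_trunc.
have [K cK hK] := f0 c c0.
pose S := [set x | c <= nc (f x)].
have cS : closed S.
  apply: (@preimage_closed _ _ (fun x => nc (f x)) [set r | c <= r]).
    by move=> x _; apply: cont_nc; exact: cf.
  exact: closed_ge.
apply: (subclosed_compact (@closed_closure _ _) cK).
apply: (@subset_trans _ S).
  rewrite (closure_id S).1 //; apply: closureS => x /= fx.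
  rewrite /S /=; case: (leP c (nc (f x))) => // lt.
  by move: fx; rewrite trunc_zero ?eqxx.
move=> x Sx; apply: contrapT => nK.
by have := hK x nK; rewrite ltNge Sx.
Qed.

Lemma pt_bound (a b n c ind : R) : 0 <= a -> 0 <= b -> 0 <= n -> n <= a + b ->
  b <= 2 * c -> (b = 0 \/ ind = 1) -> 0 <= ind ->
  n ^+ 2 <= 2 * a ^+ 2 + 8 * c ^+ 2 * ind.
Proof.
move=> a0 b0 n0 nab bc hb i0.
have h1 : n ^+ 2 <= (a + b) ^+ 2 by rewrite ler_pXn2r // ?nnegrE // addr_ge0.
have h2 : (a + b) ^+ 2 <= 2 * a ^+ 2 + 2 * b ^+ 2.
  have := sqr_ge0 (a - b); nra.
have h3 : 2 * b ^+ 2 <= 8 * c ^+ 2 * ind.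
  case: hb => [->|->].
    have := sqr_ge0 c; nra.
  rewrite mulr1; have c0 : 0 <= c by nra.
  have : b ^+ 2 <= (2 * c) ^+ 2 by rewrite ler_pXn2r // ?nnegrE // mulr_ge0.
  nra.
lra.
Qed.

Lemma int_bound (y : Y) (g h k : Y -> Cplx R) (M : set (borelG G)) (c : R) :
  continuous g -> continuous h -> continuous k -> measurable M -> 0 < c ->
  (forall z, nc (h z - k z) <= 2 * c) ->
  (forall t, h (th (inv t) y) - k (th (inv t) y) != 0 -> M t) ->
  (\int[mu]_(t in setT) ((nc (g (th (inv t) y) - k (th (inv t) y)) ^+ 2)%:E)
   <= 2%:E * \int[mu]_(t in setT) ((nc (g (th (inv t) y) - h (th (inv t) y)) ^+ 2)%:E)
      + (8 * c ^+ 2)%:E * mu M)%E.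
Proof.
move=> cg ch ck mM c0 hb sM.
pose A := fun t : G => nc (g (th (inv t) y) - h (th (inv t) y)) ^+ 2.
have cA : continuous A.
  by apply: (orbit_cont (F := fun z => g z - h z)) => z; apply: cvgB; [exact: cg | exact: ch].
have mA : measurable_fun setT (A : borelG G -> R) := meas_cont cA.
have mI : measurable_fun setT (\1_M : borelG G -> R) := measurable_indic (D:=setT) mM.
apply: (@le_trans _ _ (\int[mu]_(t in setT) ((2 * A t + 8 * c ^+ 2 * \1_M t)%:E))%E).
  apply: ge0_le_integral => //.
  - by move=> t _; rewrite lee_fin sqr_ge0.
  - apply: (orbit_meas (F := fun z => g z - k z)) => z; apply: cvgB; [exact: cg | exact: ck].
  - apply/measurable_EFinP; apply: measurable_funD; apply: measurable_funM => //.
  - move=> t _; rewrite lee_fin.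
    set z := th (inv t) y.
    apply: (@pt_bound (nc (g z - h z)) (nc (h z - k z))); rewrite ?nc_ge0 //.
    + have -> : g z - k z = (g z - h z) + (h z - k z) by rewrite addrA subrK.
      exact: ncD.
    + case: (eqVneq (h z - k z) 0) => [->|ne]; first by left; rewrite nc0.
      by right; rewrite /indic mem_set //; exact: sM.
have -> : (\int[mu]_(t in setT) ((2 * A t + 8 * c ^+ 2 * \1_M t)%:E) =
    \int[mu]_(t in setT) (2%:E * (A t)%:E + (8 * c ^+ 2)%:E * (\1_M t)%:E))%E.
  by apply: eq_integral => t _; rewrite EFinD !EFinM.
have mA' : measurable_fun setT (fun t : borelG G => (A t)%:E) := (measurable_EFinP setT _).2 mA.
have mI' : measurable_fun setT (fun t : borelG G => ((\1_M t : R)%:E)) := (measurable_EFinP setT _).2 mI.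
have A0 : forall t : borelG G, setT t -> (0 <= (A t)%:E)%E by move=> t _; rewrite lee_fin sqr_ge0.
have I0 : forall t : borelG G, setT t -> (0 <= ((\1_M t : R)%:E))%E.
  by move=> t St; rewrite lee_fin /indic ler0n.
have c20 : 0 <= 8 * c ^+ 2 by rewrite mulr_ge0 // sqr_ge0.
rewrite (ge0_integralD mu measurableT); first last.
- exact: measurable_funeM.
- by move=> t _; rewrite mule_ge0 // ?I0 // lee_fin.
- exact: measurable_funeM.
- by move=> t _; rewrite mule_ge0 // ?A0 // lee_fin.
rewrite (ge0_integralZl_EFin mu measurableT A0 mA') //.
rewrite (ge0_integralZl_EFin mu measurableT I0 mI' c20).
by rewrite integral_indic // setIT.
Qed.

Lemma approx (g h : Y -> Cplx R) (e : R) : 0 < e -> continuous g -> E0 iota h ->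
  (Enorm2 inv mu th (fun y => (g y - h y)%R) < (e / 4)%:E)%E ->
  exists2 k, CcX_in iota k & (Enorm2 inv mu th (fun y => (g y - k y)%R) < e%:E)%E.
Proof.
move=> e0 cg h0 hE1.
have [[ch cL] _] := h0.
have [B [B0 hB]] := OB_compact cL.
have B1 : 0 < B + 1 by lra.
pose c := Num.min 1 (e / (16 * (B + 1))).
have c0 : 0 < c by rewrite lt_min ltr01 /= divr_gt0 // mulr_gt0.
have c1 : c <= 1 by rewrite ge_min lexx.
have ce : c <= e / (16 * (B + 1)) by rewrite ge_min lexx orbT.
pose k := fun y => h y * cR (psi c (nc (h y))).
have ck : continuous k := cont_trunc c0 ch.
exists k; first exact: (@trunc_CcX c c0 h h0).
have key y : (\int[mu]_(t in setT) ((nc (g (th (inv t) y) - k (th (inv t) y)) ^+ 2)%R%:E)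
    <= 2%:E * Enorm2 inv mu th (fun y => (g y - h y)%R) + (8 * c ^+ 2 * B)%R%:E)%E.
  have [M [mM muM sM]] := hB y.
  apply: le_trans (int_bound (y:=y) cg ch ck mM c0 _ _) _.
  - by move=> z; exact: trunc_bound.
  - move=> t ne; apply: sM; apply: subset_closure => /=; apply/negP => /eqP hz.
    by move: ne; rewrite /k hz mul0r subrr eqxx.
  - apply: leeD.
      apply: lee_wpmul2l => //; apply: ereal_sup_ubound; by exists y.
    rewrite (EFinM (8 * c ^+ 2) B); apply: lee_wpmul2l => //.
    by rewrite lee_fin mulr_ge0 // sqr_ge0.
have hsup : (Enorm2 inv mu th (fun y => (g y - k y)%R) <=
    2%:E * Enorm2 inv mu th (fun y => (g y - h y)%R) + (8 * c ^+ 2 * B)%R%:E)%E.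
  by apply: ge_ereal_sup => _ [y _ <-]; exact: key.
apply: le_lt_trans hsup _.
have hnum : 8 * c ^+ 2 * B <= e / 2.
  have ce' : c * (16 * (B + 1)) <= e by rewrite -ler_pdivlMr // mulr_gt0.
  have cB : 0 <= c * B by rewrite mulr_ge0 // ltW.
  nra.
move: hE1; case: (Enorm2 inv mu th (fun y => (g y - h y)%R)) => [r||] //=.
  by rewrite !lte_fin => hr; lra.
by move=> _; rewrite gt0_muleNy ?addNye ?ltNyr.
Qed.
End Orbit.


Unset Implicit Arguments.
Set Strict Implicit.
Set Printing Implicit Defensive.

Theorem proposition3p1 (R : realType)
  (G : ptopologicalType) (mul : G -> G -> G) (inv : G -> G) (one : G)
  (mu : {measure set (borelG G) -> \bar R})
  (X : topologicalType) (D : G -> set X) (s : G -> X -> X)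
  (Y : topologicalType) (th : G -> Y -> Y) (iota : X -> Y) :
  is_topgroup mul inv one -> hausdorff_space G -> locally_compact [set: G] ->
  is_left_Haar mul mu ->
  hausdorff_space X -> locally_compact [set: X] ->
  is_partial_action mul inv one D s -> proper_partial_action inv D s ->
  is_enveloping_action mul inv one D s th iota ->
  (* closure of C_c(X) = closure of E^0_sigma, inside E_{sigma^e} *)
  (forall g : Y -> Cplx R, Cc g ->
     in_Eclosure inv mu th (CcX_in iota) g <-> in_Eclosure inv mu th (E0 iota) g).
Proof.
move=> Hg HG _ HH HX HLC Hpa Hpr He g [cg _]; split.
  move=> hc e e0; have [h hh he] := hc e e0.
  by exists h => //; exact: (CcX_E0 Hg HG HX HLC Hpa Hpr He).
move=> hc e e0.
have e4 : 0 < e / 4 by rewrite divr_gt0.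
have [h hh he] := hc _ e4.
exact: (approx Hg HG HLC HH Hpa Hpr He e0 cg hh he).
Qed.
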